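(* Suppose $\mathit{Act}=\{a\}$. Then the finite axiom system $\mathcal{E}_{v,1}'=\mathcal{E}_v'\cup\{V_1\}$, where ($V_1$) is $x=x+a.x$, is complete for $\simeq$ over open monitors: for all monitors $m,n$, if $m\simeq n$ then $\mathcal{E}_{v,1}'\vdash m=n$. Hence verdict equivalence has a finite equational basis when $\mathit{Act}=\{a\}$.
   Context: Monitors: terms $m,n ::= v \mid a.m \mid m+n \mid x$ over the action set $\mathit{Act}$ and variables $x$, verdicts $v::=\mathit{end}\mid\mathit{yes}\mid\mathit{no}$. Semantics: $\xrightarrow{\alpha}$ ($\alpha\in\mathit{Act}\cup\{\tau\}$) is the least relation with $a.m\xrightarrow{a}m$; $m\xrightarrow{\alpha}m'$ implies $m+n\xrightarrow{\alpha}m'$ and $n+m\xrightarrow{\alpha}m'$; $v\xrightarrow{\alpha}v$ for verdicts $v$. Weak transitions: $m\xRightarrow{\varepsilon}m'$ iff $m(\xrightarrow{\tau})^*m'$; $m\xRightarrow{a}m'$ iff $m\xRightarrow{\varepsilon}\xrightarrow{a}\xRightarrow{\varepsilon}m'$; $m\xRightarrow{as'}m'$ ($s'\ne\varepsilon$) iff $m\xRightarrow{a}m_1\xRightarrow{s'}m'$. For closed $m$, $L_a(m)=\{s\mid m\xRightarrow{s}\mathit{yes}\}$, $L_r(m)=\{s\mid m\xRightarrow{s}\mathit{no}\}$; $m\simeq n$ iff $L_a,L_r$ coincide for closed terms, and iff $\sigma(m)\simeq\sigma(n)$ for all closed substitutions $\sigma$ for open terms. $\mathcal{E}\vdash m=n$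 denotes derivability by reflexivity, symmetry, transitivity, substitution and congruence for $a.\_$ and $+$. $\mathcal{E}_v'$ consists of (A1) $x+y=y+x$; (A2) $x+(y+z)=(x+y)+z$; (A3) $x+x=x$; (A4) $x+\mathit{end}=x$; for each $a\in\mathit{Act}$: ($E_a$) $a.\mathit{end}=\mathit{end}$; ($Y_a$) $\mathit{yes}=\mathit{yes}+a.\mathit{yes}$; ($N_a$) $\mathit{no}=\mathit{no}+a.\mathit{no}$; ($D_a$) $a.(x+y)=a.x+a.y$; and (O1) $\mathit{yes}+\mathit{no}=\mathit{yes}+\mathit{no}+x$. *)

(* Defs.v *)
From Stdlib Require Import List.
Import ListNotations.
Set Implicit Arguments.

Inductive verdict : Type := vend | vyes | vno.

Inductive mon (A : Type) : Type :=
| Verd : verdict -> mon A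
| Pre : A -> mon A -> mon A
| Sum : mon A -> mon A -> mon A
| Var : nat -> mon A.
Arguments Verd {A}.
Arguments Var {A}.

Fixpoint closed {A} (m : mon A) : Prop :=
  match m with
  | Verd _ => True
  | Pre _ m => closed m
  | Sum m n => closed m /\ closed n
  | Var _ => False
  end.

Fixpoint subst {A} (s : nat -> mon A) (m : mon A) : mon A :=
  match m with
  | Verd v => Verd v
  | Pre a m => Pre a (subst s m)
  | Sum m n => Sum (subst s m) (subst s n)
  | Var x => s x
  end.

(* labelled transitions; None is tau *)
Inductive step {A} : mon A -> option A -> mon A -> Prop :=
| st_pre : forall a m, step (Pre a m) (Some a) m
| st_sumL : forall m n al m', step m al m' -> step (Sum m n) al m'
| st_sumR : forall m n al m', step m al m' -> step (Sum n m) al m'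
| st_verd : forall v al, step (Verd v) al (Verd v).

Inductive tau_star {A} : mon A -> mon A -> Prop :=
| ts_refl : forall m, tau_star m m
| ts_step : forall m m1 m2, step m None m1 -> tau_star m1 m2 -> tau_star m m2.

Fixpoint weak {A} (m : mon A) (s : list A) (m' : mon A) : Prop :=
  match s with
  | [] => tau_star m m'
  | a :: s' => exists m1 m2 m3, tau_star m m1 /\ step m1 (Some a) m2 /\
                 tau_star m2 m3 /\ weak m3 s' m'
  end.

Definition acc {A} (m : mon A) (s : list A) : Prop := weak m s (Verd vyes).
Definition rej {A} (m : mon A) (s : list A) : Prop := weak m s (Verd vno).

Definition veq_closed {A} (m n : mon A) : Prop :=
  forall s, (acc m s <-> acc n s) /\ (rej m s <-> rej n s).

Definition veq {A} (m n : mon A) : Prop :=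
  forall sg : nat -> mon A, (forall x, closed (sg x)) ->
    veq_closed (subst sg m) (subst sg n).

Inductive derivable {A} (E : mon A -> mon A -> Prop) : mon A -> mon A -> Prop :=
| d_ax : forall l r, E l r -> derivable E l r
| d_refl : forall m, derivable E m m
| d_sym : forall m n, derivable E m n -> derivable E n m
| d_trans : forall m n p, derivable E m n -> derivable E n p -> derivable E m p
| d_subst : forall sg m n, derivable E m n -> derivable E (subst sg m) (subst sg n)
| d_pre : forall a m n, derivable E m n -> derivable E (Pre a m) (Pre a n)
| d_sum : forall m m' n n', derivable E m m' -> derivable E n n' ->
    derivable E (Sum m n) (Sum m' n').

Definition vx {A} : mon A := Var 0.
Definition vy {A} : mon A := Var 1.
Definition vz {A} : mon A := Var 2.

Inductive Ev' {A} : mon A -> mon A -> Prop :=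
| A1 : Ev' (Sum vx vy) (Sum vy vx)
| A2 : Ev' (Sum vx (Sum vy vz)) (Sum (Sum vx vy) vz)
| A3 : Ev' (Sum vx vx) vx
| A4 : Ev' (Sum vx (Verd vend)) vx
| Ea : forall a, Ev' (Pre a (Verd vend)) (Verd vend)
| Ya : forall a, Ev' (Verd vyes) (Sum (Verd vyes) (Pre a (Verd vyes)))
| Na : forall a, Ev' (Verd vno) (Sum (Verd vno) (Pre a (Verd vno)))
| Da : forall a, Ev' (Pre a (Sum vx vy)) (Sum (Pre a vx) (Pre a vy))
| O1 : Ev' (Sum (Verd vyes) (Verd vno)) (Sum (Sum (Verd vyes) (Verd vno)) vx).

Inductive Ev1' {A} (a : A) : mon A -> mon A -> Prop :=
| E_old : forall l r, Ev' l r -> Ev1' a l r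
| V1 : Ev1' a vx (Sum vx (Pre a vx)).

(* Main.v *)
Require Import Defs.
From Stdlib Require Import List Lia Arith.
Import ListNotations.

Definition sg3 {A} (p q r : mon A) : nat -> mon A :=
  fun n => match n with 0 => p | 1 => q | _ => r end.

Lemma ax {A} (a : A) {l r} p q s : Ev1' a l r ->
  derivable (Ev1' a) (subst (sg3 p q s) l) (subst (sg3 p q s) r).
Proof. intro H. apply d_subst, d_ax, H. Qed.

Ltac axi a H p q s :=
  let K := fresh in pose proof (ax a p q s H) as K; cbv [subst sg3 vx vy vz] in K.


Lemma comm {A} (a : A) p q : derivable (Ev1' a) (Sum p q) (Sum q p).
Proof. axi a (E_old a A1) p q p. exact H. Qed.
Lemma assoc {A} (a : A) p q r : derivable (Ev1' a) (Sum p (Sum q r)) (Sum (Sum p q) r).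
Proof. axi a (E_old a A2) p q r. exact H. Qed.
Lemma idem {A} (a : A) p : derivable (Ev1' a) (Sum p p) p.
Proof. axi a (E_old a A3) p p p. exact H. Qed.
Lemma endr {A} (a : A) p : derivable (Ev1' a) (Sum p (Verd vend)) p.
Proof. axi a (E_old a A4) p p p. exact H. Qed.
Lemma pre_end {A} (a : A) b : derivable (Ev1' a) (Pre b (Verd vend)) (Verd vend).
Proof. apply d_ax, E_old, Ea. Qed.
Lemma yesax {A} (a : A) : derivable (Ev1' a) (Sum (Verd vyes) (Pre a (Verd vyes))) (Verd vyes).
Proof. apply d_sym, d_ax, E_old, Ya. Qed.
Lemma noax {A} (a : A) : derivable (Ev1' a) (Sum (Verd vno) (Pre a (Verd vno))) (Verd vno).
Proof. apply d_sym, d_ax, E_old, Na. Qed.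
Lemma distr {A} (a : A) b p q : derivable (Ev1' a) (Pre b (Sum p q)) (Sum (Pre b p) (Pre b q)).
Proof. axi a (E_old a (Da b)) p q p. exact H. Qed.
Lemma o1 {A} (a : A) p : derivable (Ev1' a) (Sum (Sum (Verd vyes) (Verd vno)) p) (Sum (Verd vyes) (Verd vno)).
Proof. axi a (E_old a O1) p p p. apply d_sym; exact H. Qed.
Lemma v1 {A} (a : A) p : derivable (Ev1' a) (Sum p (Pre a p)) p.
Proof. axi a (V1 a) p p p. apply d_sym; exact H. Qed.

Definition absorbs {A} (a : A) M t := derivable (Ev1' a) (Sum M t) M.

Ltac dt := eapply d_trans.

Lemma abs_eq {A} (a : A) m n : absorbs a m n -> absorbs a n m -> derivable (Ev1' a) m n.
Proof. unfold absorbs; intros H1 H2. dt. apply d_sym, H1. dt. apply comm. exact H2. Qed.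

Lemma abs_sum {A} (a : A) M p q : absorbs a M p -> absorbs a M q -> absorbs a M (Sum p q).
Proof. unfold absorbs; intros H1 H2. dt. apply assoc. dt. apply d_sum. apply H1. apply d_refl. exact H2. Qed.

Lemma abs_congL {A} (a : A) M M' t : derivable (Ev1' a) M M' -> absorbs a M t -> absorbs a M' t.
Proof. unfold absorbs; intros H1 H2. dt. apply d_sum. apply d_sym, H1. apply d_refl. dt. exact H2. exact H1. Qed.

Lemma abs_congR {A} (a : A) M t t' : derivable (Ev1' a) t t' -> absorbs a M t -> absorbs a M t'.
Proof. unfold absorbs; intros H1 H2. dt. apply d_sum. apply d_refl. apply d_sym, H1. exact H2. Qed.

Lemma abs_trans {A} (a : A) M p q : absorbs a M p -> absorbs a p q -> absorbs a M q.
Proof. unfold absorbs; intros H1 H2. dt. apply d_sum. apply d_sym, H1. apply d_refl.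
  dt. apply d_sym, assoc. dt. apply d_sum. apply d_refl. exact H2. exact H1. Qed.

Lemma abs_refl {A} (a : A) M : absorbs a M M.
Proof. apply idem. Qed.

Lemma abs_sumL {A} (a : A) M N t : absorbs a M t -> absorbs a (Sum M N) t.
Proof. unfold absorbs; intros H. dt. apply d_sym, assoc. dt. apply d_sum. apply d_refl. apply comm.
  dt. apply assoc. apply d_sum. exact H. apply d_refl. Qed.

Lemma abs_sumR {A} (a : A) M N t : absorbs a N t -> absorbs a (Sum M N) t.
Proof. intros H. eapply abs_congL. apply comm. apply abs_sumL, H. Qed.

Lemma abs_end {A} (a : A) M : absorbs a M (Verd vend).
Proof. apply endr. Qed.

Lemma abs_pre {A} (a : A) b p q : absorbs a p q -> absorbs a (Pre b p) (Pre b q).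
Proof. unfold absorbs; intros H. dt. apply d_sym, distr. apply d_pre, H. Qed.

Fixpoint pw {A} (a : A) (d : nat) (t : mon A) : mon A :=
  match d with 0 => t | S d => pw a d (Pre a t) end.

Lemma pw_cong {A} (a : A) d : forall X Y, derivable (Ev1' a) X Y -> derivable (Ev1' a) (pw a d X) (pw a d Y).
Proof. induction d; simpl; intros. auto. apply IHd, d_pre, H. Qed.

Lemma pw_sum {A} (a : A) d : forall X Y, derivable (Ev1' a) (pw a d (Sum X Y)) (Sum (pw a d X) (pw a d Y)).
Proof. induction d; simpl; intros. apply d_refl. dt. apply pw_cong, distr. apply IHd. Qed.

Lemma abs_pw {A} (a : A) d : forall p q, absorbs a p q -> absorbs a (pw a d p) (pw a d q).
Proof. induction d; simpl; intros. auto. apply IHd, abs_pre, H. Qed.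

Lemma pw_add {A} (a : A) j : forall i t, pw a (j + i) t = pw a i (pw a j t).
Proof. induction j; simpl; intros; auto. Qed.

Lemma pw_pre {A} (a : A) d : forall t, pw a d (Pre a t) = Pre a (pw a d t).
Proof. induction d; simpl; intros; auto. Qed.

Lemma pw_end {A} (a : A) d : derivable (Ev1' a) (pw a d (Verd vend)) (Verd vend).
Proof. induction d; simpl. apply d_refl. dt. apply pw_cong, pre_end. exact IHd. Qed.

Lemma abs_iter {A} (a : A) t : absorbs a t (Pre a t) -> forall i, absorbs a t (pw a i t).
Proof. intros H i. induction i; simpl. apply abs_refl.
  eapply abs_trans. exact IHi. apply abs_pw, H. Qed.

Lemma abs_mono {A} (a : A) t : absorbs a t (Pre a t) -> forall j k, j <= k -> absorbs a (pw a j t) (pw a k t).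
Proof. intros H j k Hjk. replace k with (j + (k - j)) by lia. rewrite pw_add.
  rewrite <- pw_add, Nat.add_comm, pw_add. apply abs_pw, abs_iter, H. Qed.

Lemma abs_cut {A} (a : A) M j1 j2 k t : j1 <= k -> j2 <= k ->
  absorbs a M (pw a j1 (Verd vyes)) -> absorbs a M (pw a j2 (Verd vno)) ->
  absorbs a M (pw a k t).
Proof. intros H1 H2 Y N.
  assert (Hy: absorbs a M (pw a k (Verd vyes))).
  { eapply abs_trans. exact Y. apply abs_mono; auto. apply yesax. }
  assert (Hn: absorbs a M (pw a k (Verd vno))).
  { eapply abs_trans. exact N. apply abs_mono; auto. apply noax. }
  assert (Hb: absorbs a M (pw a k (Sum (Verd vyes) (Verd vno)))).
  { eapply abs_congR. apply d_sym, pw_sum. apply abs_sum; auto. }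
  eapply abs_trans. exact Hb. apply abs_pw. apply o1.
Qed.

Fixpoint mons {A} (m : mon A) : list (nat * mon A) :=
  match m with
  | Verd v => [(0, Verd v)]
  | Var x => [(0, Var x)]
  | Sum p q => mons p ++ mons q
  | Pre _ p => map (fun t => (S (fst t), snd t)) (mons p)
  end.

Lemma abs_of_mons {A} (a : A) (Hs : forall b : A, b = a) n : forall d M,
  (forall k l, In (k,l) (mons n) -> absorbs a M (pw a (d+k) l)) -> absorbs a M (pw a d n).
Proof.
  induction n; simpl; intros d M H.
  - specialize (H 0 (Verd v) (or_introl eq_refl)). rewrite Nat.add_0_r in H. exact H.
  - rewrite (Hs a0). change (pw a d (Pre a n)) with (pw a (S d) n).
    apply IHn. intros k l Hin. replace (S d + k) with (d + S k) by lia.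
    apply H. apply in_map_iff. exists (k,l); auto.
  - eapply abs_congR. apply d_sym, pw_sum. apply abs_sum.
    + apply IHn1. intros; apply H, in_or_app; auto.
    + apply IHn2. intros; apply H, in_or_app; auto.
  - specialize (H 0 (Var n) (or_introl eq_refl)). rewrite Nat.add_0_r in H. exact H.
Qed.

Lemma mons_abs {A} (a : A) (Hs : forall b : A, b = a) m : forall d k l,
  In (k,l) (mons m) -> absorbs a (pw a d m) (pw a (d+k) l).
Proof.
  induction m; simpl; intros d k l H.
  - destruct H as [H|[]]. inversion H; subst. rewrite Nat.add_0_r. apply abs_refl.
  - rewrite (Hs a0). change (pw a d (Pre a m)) with (pw a (S d) m).
    apply in_map_iff in H. destruct H as [[k' l'] [E Hin]]. simpl in E. inversion E; subst.
    replace (d + S k') with (S d + k') by lia. apply IHm, Hin.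
  - eapply abs_congL. apply d_sym, pw_sum. apply in_app_or in H. destruct H.
    + apply abs_sumL, IHm1, H.
    + apply abs_sumR, IHm2, H.
  - destruct H as [H|[]]. inversion H; subst. rewrite Nat.add_0_r. apply abs_refl.
Qed.

Definition Dom {A} (c c' : mon A) d := forall j l, In (j,l) (mons c') -> exists j', j' <= j + d /\ In (j', l) (mons c).

Lemma step_none {A} {c c' : mon A} {al} : step c al c' -> al = None -> exists v, c' = Verd v /\ In (0, Verd v) (mons c).
Proof. induction 1; intros E; try discriminate.
  - destruct (IHstep E) as [v [H1 H2]]. exists v; split; auto. simpl; apply in_or_app; auto.
  - destruct (IHstep E) as [v [H1 H2]]. exists v; split; auto. simpl; apply in_or_app; auto.
  - exists v; simpl; auto.
Qed.

Lemma step_dom {A} (c c' : mon A) al : step c al c' -> Dom c c' 1.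
Proof. unfold Dom. induction 1; intros j l Hin; simpl.
  - exists (S j); split. lia. apply in_map_iff. exists (j,l); auto.
  - destruct (IHstep j l Hin) as [j' [H1 H2]]. exists j'; split; auto. apply in_or_app; auto.
  - destruct (IHstep j l Hin) as [j' [H1 H2]]. exists j'; split; auto. apply in_or_app; auto.
  - exists j; split; auto. lia.
Qed.

Lemma dom_trans {A} (c1 c2 c3 : mon A) d e : Dom c1 c2 d -> Dom c2 c3 e -> Dom c1 c3 (d + e).
Proof. unfold Dom; intros H1 H2 j l Hin.
  destruct (H2 j l Hin) as [j' [A1 A2]]. destruct (H1 j' l A2) as [j'' [B1 B2]].
  exists j''; split; auto. lia. Qed.

Lemma dom_refl {A} (c : mon A) : Dom c c 0.
Proof. intros j l H; exists j; split; auto; lia. Qed.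

Lemma tau_dom {A} (c c' : mon A) : tau_star c c' -> Dom c c' 0.
Proof. induction 1. apply dom_refl.
  destruct (step_none H eq_refl) as [v [E Hin]]. subst.
  replace 0 with (0 + 0) by lia. eapply dom_trans; [|exact IHtau_star].
  intros j l [H'|[]]. inversion H'; subst. exists 0; auto.
Qed.

Lemma weak_dom {A} {s : list A} : forall (c c' : mon A), weak c s c' -> Dom c c' (length s).
Proof. induction s; simpl; intros c c' H. apply tau_dom, H.
  destruct H as [m1 [m2 [m3 [H1 [H2 [H3 H4]]]]]].
  replace (S (length s)) with (((0 + 1) + 0) + length s) by lia.
  eapply dom_trans; [|apply IHs, H4]. eapply dom_trans; [|apply tau_dom, H3].
  eapply dom_trans; [apply tau_dom, H1|]. eapply step_dom, H2.
Qed.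

Lemma weak_verd {A} (s : list A) c v : weak c s (Verd v) -> exists j, j <= length s /\ In (j, Verd v) (mons c).
Proof. intros H. destruct (@weak_dom _ _ _ _ H 0 (Verd v) (or_introl eq_refl)) as [j [H1 H2]].
  exists j; auto. Qed.

Lemma weak_sumL {A} (s : list A) p q v : weak p s (Verd v) -> weak (Sum p q) s (Verd v).
Proof. destruct s; simpl; intros H.
  - inversion H; subst. eapply ts_step. apply st_sumL, st_verd. apply ts_refl.
    eapply ts_step. apply st_sumL, H0. exact H1.
  - destruct H as [m1 [m2 [m3 [H1 [H2 [H3 H4]]]]]]. inversion H1; subst.
    + exists (Sum m1 q), m2, m3. repeat split; auto. apply ts_refl. apply st_sumL, H2.
    + exists m1, m2, m3. repeat split; auto. eapply ts_step. apply st_sumL, H. exact H0.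
Qed.

Lemma weak_sumR {A} (s : list A) p q v : weak p s (Verd v) -> weak (Sum q p) s (Verd v).
Proof. destruct s; simpl; intros H.
  - inversion H; subst. eapply ts_step. apply st_sumR, st_verd. apply ts_refl.
    eapply ts_step. apply st_sumR, H0. exact H1.
  - destruct H as [m1 [m2 [m3 [H1 [H2 [H3 H4]]]]]]. inversion H1; subst.
    + exists (Sum q m1), m2, m3. repeat split; auto. apply ts_refl. apply st_sumR, H2.
    + exists m1, m2, m3. repeat split; auto. eapply ts_step. apply st_sumR, H. exact H0.
Qed.

Lemma verd_weak {A} (a : A) (Hs : forall b : A, b = a) c : forall k v,
  In (k, Verd v) (mons c) -> weak c (repeat a k) (Verd v).
Proof. induction c; simpl; intros k w H.
  - destruct H as [H|[]]. inversion H; subst. simpl. apply ts_refl.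
  - apply in_map_iff in H. destruct H as [[k' l'] [E Hin]]. simpl in E. inversion E; subst.
    simpl. exists (Pre a0 c), c, c. repeat split. apply ts_refl. rewrite (Hs a0) at 1. apply st_pre.
    apply ts_refl. apply IHc, Hin.
  - apply in_app_or in H. destruct H. apply weak_sumL, IHc1, H. apply weak_sumR, IHc2, H.
  - destruct H as [H|[]]. discriminate.
Qed.

Definition sgf {A} (f : nat -> verdict) : nat -> mon A := fun x => Verd (f x).

Lemma mons_subst {A} (f : nat -> verdict) (m : mon A) :
  mons (subst (sgf f) m) = map (fun t => (fst t, subst (sgf f) (snd t))) (mons m).
Proof. induction m; simpl; auto. rewrite IHm, !map_map. auto.
  rewrite IHm1, IHm2, map_app; auto. Qed.

Lemma mons_leaf {A} (m : mon A) j l : In (j,l) (mons m) -> (exists v, l = Verd v) \/ (exists y, l = Var y).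
Proof. revert j; induction m; simpl; intros j H.
  - destruct H as [H|[]]; inversion H; eauto.
  - apply in_map_iff in H. destruct H as [[k' l'] [E Hin]]. inversion E; subst. eapply IHm, Hin.
  - apply in_app_or in H; destruct H; eauto.
  - destruct H as [H|[]]; inversion H; eauto.
Qed.

Lemma transfer {A} (a : A) (Hs : forall b : A, b = a) (m n : mon A) f k l v :
  veq m n -> In (k,l) (mons n) -> subst (sgf f) l = Verd v -> v = vyes \/ v = vno ->
  exists j l', j <= k /\ In (j,l') (mons m) /\ subst (sgf f) l' = Verd v.
Proof. intros Hv Hin Hl Hvv.
  assert (H1: In (k, Verd v) (mons (subst (sgf f) n))).
  { rewrite mons_subst. apply in_map_iff. exists (k,l); simpl; rewrite Hl; auto. }
  apply (verd_weak a Hs) in H1.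
  assert (Hc: forall x, closed (@sgf A f x)) by (intros; simpl; auto).
  destruct (Hv _ Hc (repeat a k)) as [Ha Hr].
  assert (H2: weak (subst (sgf f) m) (repeat a k) (Verd v)).
  { destruct Hvv; subst. apply Ha, H1. apply Hr, H1. }
  apply weak_verd in H2. destruct H2 as [j [Hj Hin2]]. rewrite repeat_length in Hj.
  rewrite mons_subst in Hin2. apply in_map_iff in Hin2. destruct Hin2 as [[j' l'] [E Hin']].
  simpl in E. inversion E; subst. exists j, l'; auto.
Qed.

Lemma leaf_case {A} (m : mon A) j l f v : In (j,l) (mons m) -> subst (sgf f) l = Verd v ->
  l = Verd v \/ exists y, l = Var y /\ f y = v.
Proof. intros Hin E. destruct (mons_leaf _ _ _ Hin) as [[w ->]|[y ->]]; simpl in E; inversion E; subst; eauto. Qed.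

Lemma veq_sym {A} (m n : mon A) : veq m n -> veq n m.
Proof. intros H sg Hc s. destruct (H sg Hc s) as [H1 H2]. split; split; intros; [apply H1|apply H1|apply H2|apply H2]; auto. Qed.

Lemma own {A} (a : A) (Hs : forall b : A, b = a) m j l : In (j,l) (mons m) -> absorbs a m (pw a j l).
Proof. intros H. exact (mons_abs a Hs m 0 j l H). Qed.

Lemma half {A} (a : A) (Hs : forall b : A, b = a) (m n : mon A) : veq m n -> absorbs a m n.
Proof. intros Hv. apply (abs_of_mons a Hs n 0 m). intros k l Hin. simpl.
  destruct (mons_leaf _ _ _ Hin) as [[v ->]|[y ->]].
  - destruct v.
    + eapply abs_congR. apply d_sym, pw_end. apply abs_end.
    + destruct (transfer a Hs m n (fun _ => vend) k _ _ Hv Hin eq_refl (or_introl eq_refl)) as [j [l' [Hj [Hin' E]]]].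
      destruct (leaf_case _ _ _ _ _ Hin' E) as [->|[y [_ Hy]]]; [|discriminate].
      eapply abs_trans. apply (own a Hs _ _ _ Hin'). apply abs_mono; auto. apply yesax.
    + destruct (transfer a Hs m n (fun _ => vend) k _ _ Hv Hin eq_refl (or_intror eq_refl)) as [j [l' [Hj [Hin' E]]]].
      destruct (leaf_case _ _ _ _ _ Hin' E) as [->|[y [_ Hy]]]; [|discriminate].
      eapply abs_trans. apply (own a Hs _ _ _ Hin'). apply abs_mono; auto. apply noax.
  - assert (Hvar: forall j, j <= k -> In (j, Var y) (mons m) -> absorbs a m (pw a k (Var y))).
    { intros j Hj Hin'. eapply abs_trans. apply (own a Hs _ _ _ Hin'). apply abs_mono; auto. apply v1. }
    destruct (transfer a Hs m n (fun z => if Nat.eqb z y then vyes else vend) k (Var y) vyes Hv Hin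
       ltac:(cbv [subst sgf]; rewrite Nat.eqb_refl; reflexivity) (or_introl eq_refl)) as [j1 [l1 [Hj1 [Hin1 E1]]]].
    destruct (leaf_case _ _ _ _ _ Hin1 E1) as [->|[y1 [-> Hy1]]].
    2:{ destruct (Nat.eqb_spec y1 y); [subst|discriminate]. eapply Hvar; eauto. }
    destruct (transfer a Hs m n (fun z => if Nat.eqb z y then vno else vend) k (Var y) vno Hv Hin
       ltac:(cbv [subst sgf]; rewrite Nat.eqb_refl; reflexivity) (or_intror eq_refl)) as [j2 [l2 [Hj2 [Hin2 E2]]]].
    destruct (leaf_case _ _ _ _ _ Hin2 E2) as [->|[y2 [-> Hy2]]].
    2:{ destruct (Nat.eqb_spec y2 y); [subst|discriminate]. eapply Hvar; eauto. }
    eapply (abs_cut a m j1 j2 k); eauto; apply (own a Hs); auto.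
Qed.

Theorem mainTheorem16 (A : Type) (a : A) (Hsingle : forall b : A, b = a)
  (m n : mon A) :
  veq m n -> derivable (Ev1' a) m n.
Proof. intros H. apply abs_eq. apply (half a Hsingle), H. apply (half a Hsingle), veq_sym, H. Qed.
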